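(* Let $a\in[0,4)$. Then for every $s\in Q_a$, $\lim_{n\to\infty}W^n(s)=(0,0,0,0)$.
   Context: $W:\mathbb{R}^4\to\mathbb{R}^4$ is the map $W(x,y,u,v)=(x',y',u',v')$ with $x'=\tfrac12 xu+\tfrac14 yu$, $y'=\tfrac12 xv+\tfrac14 yu+\tfrac13 yv$, $u'=\tfrac12 xu+\tfrac12 xv+\tfrac14 yu+\tfrac13 yv$, $v'=\tfrac14 yu+\tfrac13 yv$. $W^n$ denotes the $n$-fold iterate. $P=\{(x,y,u,v): x,y,u,v\ge0\}$ and $Q_a=\{(x,y,u,v)\in P: x+y+u+v\le a\}$. *)

(* Defs.v *)
From Stdlib Require Import Reals.
Open Scope R_scope.

Record R4 := mkR4 { cx : R; cy : R; cu : R; cv : R }.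

Definition W (s : R4) : R4 :=
  let x := cx s in let y := cy s in let u := cu s in let v := cv s in
  mkR4 (1/2 * x * u + 1/4 * y * u)
       (1/2 * x * v + 1/4 * y * u + 1/3 * y * v)
       (1/2 * x * u + 1/2 * x * v + 1/4 * y * u + 1/3 * y * v)
       (1/4 * y * u + 1/3 * y * v).

Fixpoint Wn (n : nat) (s : R4) : R4 :=
  match n with O => s | S k => W (Wn k s) end.

Definition in_P (s : R4) : Prop :=
  0 <= cx s /\ 0 <= cy s /\ 0 <= cu s /\ 0 <= cv s.

Definition in_Q (a : R) (s : R4) : Prop :=
  in_P s /\ cx s + cy s + cu s + cv s <= a.

Definition R4_cv (f : nat -> R4) (l : R4) : Prop :=
  Un_cv (fun n => cx (f n)) (cx l) /\ Un_cv (fun n => cy (f n)) (cy l) /\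
  Un_cv (fun n => cu (f n)) (cu l) /\ Un_cv (fun n => cv (f n)) (cv l).

(* Main.v *)
Require Import Defs.
From Stdlib Require Import Reals Lra Lia Psatz.
Open Scope R_scope.

Definition Ssum (s : R4) := cx s + cy s + cu s + cv s.

Lemma step (a : R) (ha0 : 0 <= a) (ha4 : a < 4) (s : R4) (n : nat) (hs : in_Q a s) :
  in_P (Wn n s) /\ Ssum (Wn n s) <= a /\ Ssum (Wn n s) <= a * (a/4)^n.
Proof.
  destruct hs as [[h1 [h2 [h3 h4]]] hS].
  induction n as [|n IH].
  - simpl. unfold in_P, Ssum. repeat split; lra.
  - destruct IH as [[g1 [g2 [g3 g4]]] [gS gR]].
    simpl. unfold in_P, Ssum in *. simpl.
    revert g1 g2 g3 g4 gS gR.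
    generalize (cx (Wn n s)) (cy (Wn n s)) (cu (Wn n s)) (cv (Wn n s)).
    intros x y u v g1 g2 g3 g4 gS gR.
    assert (E : 1 / 2 * x * u + 1 / 4 * y * u + (1 / 2 * x * v + 1 / 4 * y * u + 1 / 3 * y * v) +
      (1 / 2 * x * u + 1 / 2 * x * v + 1 / 4 * y * u + 1 / 3 * y * v) + (1 / 4 * y * u + 1 / 3 * y * v)
      = (x + y) * (u + v)) by field.
    rewrite E.
    assert (B : (x + y) * (u + v) <= (x+y+u+v) * (x+y+u+v) / 4).
    { assert (0 <= (x+y-(u+v))*(x+y-(u+v))) by apply Rle_0_sqr. lra. }
    assert (0 <= (a/4)^n) by (apply pow_le; lra).
    assert (B2 : (x+y+u+v) * (x+y+u+v) / 4 <= (x+y+u+v) * (a/4)).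
    { assert (0 <= (x+y+u+v)*(a - (x+y+u+v))) by (apply Rmult_le_pos; lra). lra. }
    assert (B3 : (x+y+u+v) * (a/4) <= a * (a/4)^n * (a/4)).
    { apply Rmult_le_compat_r; lra. }
    assert (a * (a/4) <= a) by (assert (0 <= a*(4-a)) by (apply Rmult_le_pos; lra); lra).
    repeat split; try nra.
Qed.

Lemma coord_cv (a : R) (ha0 : 0 <= a) (ha4 : a < 4) (f : nat -> R) :
  (forall n, 0 <= f n <= a * (a/4)^n) -> Un_cv f 0.
Proof.
  intros H eps He.
  assert (Hr : Rabs (a/4) < 1) by (rewrite Rabs_right; lra).
  destruct (pow_lt_1_zero (a/4) Hr (eps/(a+1))) as [N HN].
  { apply Rdiv_lt_0_compat; lra. }
  exists N. intros n Hn. unfold R_dist. rewrite Rminus_0_r.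
  specialize (H n). specialize (HN n Hn).
  assert (0 <= (a/4)^n) by (apply pow_le; lra).
  rewrite Rabs_right in HN by lra.
  rewrite Rabs_right by lra.
  assert (HN' : (a/4)^n * (a+1) < eps).
  { apply (Rmult_lt_compat_r (a+1)) in HN; [|lra].
    unfold Rdiv in HN. rewrite Rmult_assoc, Rinv_l in HN by lra. lra. }
  nra.
Qed.

Theorem lemma3p2 (a : R) (ha0 : 0 <= a) (ha4 : a < 4) (s : R4) (hs : in_Q a s) :
  R4_cv (fun n => Wn n s) (mkR4 0 0 0 0).
Proof.
  unfold R4_cv; simpl.
  pose proof (fun n => step a ha0 ha4 s n hs) as H.
  repeat split; apply (coord_cv a ha0 ha4); intro n;
  destruct (H n) as [[g1 [g2 [g3 g4]]] [gS gR]]; unfold Ssum in *; lra.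
Qed.
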